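(* Fix a constant $c\ge1$. There is a constant $C>0$ depending only on $c$ such that the following holds for all integers $n\ge3$, $U\ge3$ with $n/c\le U\le cn$. Let $z(0)$ be a row vector indexed by the $2n$ states with nonnegative entries summing to $F>0$, and let $z(t)=z(0)K^t$. Then for every $\epsilon'\in(0,1/2]$ and every $t\ge C\,n\log(n/\epsilon')$, $$|z_x(t)-\pi_xF|\le\frac{\epsilon'}{2n}F\quad\text{for every state }x.$$
   Context: Let $n\ge3$ and $U\ge3$ be integers. The ''original chain'' is the Markov chain on the $2n$ states $\{1,\dots,n,1',\dots,n'\}$ with the following transition probabilities (all unlisted transitions have probability $0$): for $2\le i\le n-1$: $i\to i$ w.p. $1/2$, $i\to i+1$ w.p. $\frac12(1-\frac1U)$, $i\to(i+1)'$ w.p. $\frac1{2U}$; for $2\le i\le n-1$: $i'\to i'$ w.p. $1/2$, $i'\to(i-1)'$ w.p. $\frac12(1-\frac1U)$, $i'\to i-1$ w.p. $\frac1{2U}$; $1\to2$ w.p. $1-\frac1U$, $1\to2'$ w.p. $\frac1U$; $1'\to1$ w.p. $1-\frac1U$, $1'\to1'$ w.p. $\frac1U$; $n\to n'$ w.p. $1-\frac1U$, $n\to n$ w.p. $\frac1U$; $n'\to(n-1)'$ w.p. $1-\frac1U$, $n'\to n-1$ w.p. $\frac1U$. $K$ is its $2n\times 2n$ row-stochastic transition matrix ($K_{xy}$ = probability of moving from $x$ to $y$), and $\pi$ its unique stationary distribution ($\pi K=\pi$). *)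

(* Defs.v *)
From Stdlib Require Import Reals Lra Lia List.
Import ListNotations.
Open Scope R_scope.

Fixpoint sumR (m : nat) (f : nat -> R) : R :=
  match m with
  | O => 0
  | S k => sumR k f + f k
  end.

(* Encoding of the 2n states as 0 .. 2n-1:
   unprimed state i (1<=i<=n) is index i-1,
   primed state i' (1<=i<=n) is index n+i-1. *)
Definition unp (n i : nat) : nat := (i - 1)%nat.
Definition prm (n i : nat) : nat := (n + i - 1)%nat.

Definition trans (n U x : nat) : list (nat * R) :=
  let u := / INR U in
  if (x <? n)%nat then
    let i := (x + 1)%nat in
    if (i =? 1)%nat then [(unp n 2, 1 - u); (prm n 2, u)]
    else if (i =? n)%nat then [(prm n n, 1 - u); (unp n n, u)]
    else [(unp n i, 1/2); (unp n (i+1), 1/2 * (1 - u)); (prm n (i+1), / (2 * INR U))]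
  else
    let i := (x - n + 1)%nat in
    if (i =? 1)%nat then [(unp n 1, 1 - u); (prm n 1, u)]
    else if (i =? n)%nat then [(prm n (n-1), 1 - u); (unp n (n-1), u)]
    else [(prm n i, 1/2); (prm n (i-1), 1/2 * (1 - u)); (unp n (i-1), / (2 * INR U))].

Definition K (n U x y : nat) : R :=
  fold_right (fun p acc => (if Nat.eqb (fst p) y then snd p else 0) + acc) 0 (trans n U x).

Definition is_stationary (n U : nat) (pi : nat -> R) : Prop :=
  (forall x, (x < 2 * n)%nat -> 0 <= pi x) /\
  sumR (2 * n) pi = 1 /\
  (forall y, (y < 2 * n)%nat -> sumR (2 * n) (fun x => pi x * K n U x y) = pi y).

Fixpoint zt (n U : nat) (z0 : nat -> R) (t : nat) : nat -> R :=
  match t with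
  | O => z0
  | S t' => fun y => sumR (2 * n) (fun x => zt n U z0 t' x * K n U x y)
  end.

(* Main.v *)
Require Import Defs.
From Stdlib Require Import Reals Lra Lia List Bool Arith ZArith.
Import ListNotations.

Open Scope nat_scope.

Fixpoint binom (a k : nat) : nat :=
  match a, k with
  | _, O => 1
  | O, S _ => 0
  | S a', S k' => binom a' k' + binom a' (S k')
  end.

Lemma binom_gt : forall a k, a < k -> binom a k = 0.
Proof. induction a; intros k H; destruct k; simpl; try lia. rewrite !IHa; lia. Qed.

Lemma binom_pos : forall a k, k <= a -> 1 <= binom a k.
Proof. induction a; intros k H; destruct k; simpl; try lia. specialize (IHa k ltac:(lia)). lia. Qed.

Lemma binom_0 : forall a, binom a 0 = 1.
Proof. destruct a; reflexivity. Qed.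

Lemma binom_SS : forall a k, binom (S a) (S k) = binom a k + binom a (S k).
Proof. reflexivity. Qed.

Definition bzN (t b r : nat) : nat := if (b <=? r) && (r <=? t) then binom (t - b) (r - b) else 0.
Definition bzbN (t b r : nat) : nat := if (t =? b) && (r =? b) then 1 else bzN t (S b) r.

Ltac bzcase := unfold bzN; repeat match goal with
  | |- context [?a <=? ?b] => destruct (Nat.leb_spec a b)
  end; cbn [andb]; try lia.

Lemma bzN_shift : forall t b r, bzN (S t) (S b) (S r) = bzN t b r.
Proof. intros. unfold bzN. simpl. reflexivity. Qed.

Lemma bzN_pascal_t : forall t b r, b <= r -> bzN (S t) b (S r) = bzN t b (S r) + bzN t b r.
Proof. intros t b r H. bzcase.
  - replace (S t - b) with (S (t - b)) by lia. replace (S r - b) with (S (r - b)) by lia. simpl. lia.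
  - replace (S t - b) with (S (t - b)) by lia. replace (S r - b) with (S (r - b)) by lia. simpl.
    rewrite (binom_gt (t - b) (S (r - b))) by lia. lia.
Qed.

Lemma bzN_pascal_b : forall t b r, ~ (t = b /\ r = b) -> bzN t b r = bzN t (S b) (S r) + bzN t (S b) r.
Proof. intros t b r H. bzcase.
  - replace (t - b) with (S (t - S b)) by lia. replace (r - b) with (S (r - S b)) by lia.
    replace (S r - S b) with (S (r - S b)) by lia. rewrite binom_SS. lia.
  - assert (r = b) by lia. subst. replace (t - b) with (S (t - S b)) by lia. rewrite !Nat.sub_diag.
    rewrite !binom_0; lia.
  - assert (r = t) by lia. subst. replace (t - b) with (S (t - S b)) by lia. rewrite binom_SS.
    rewrite (binom_gt (t - S b) (S (t - S b))) by lia. lia.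
Qed.

Lemma bzN_zero_t0 : forall b r, 0 < r -> bzN 0 b r = 0.
Proof. intros. bzcase. Qed.

Lemma bzN_t00 : forall t, bzN t 0 0 = 1.
Proof. intros. bzcase. apply binom_0. Qed.

Lemma bzN_mono_b : forall t b r, bzN t (S b) r <= bzN t b r.
Proof. intros t b r. destruct (Nat.eq_dec t b); destruct (Nat.eq_dec r b); subst.
  - bzcase.
  - assert (E := bzN_pascal_b b b r ltac:(lia)). lia.
  - assert (E := bzN_pascal_b t b b ltac:(lia)). lia.
  - assert (E := bzN_pascal_b t b r ltac:(lia)). lia.
Qed.

Lemma bzN_pos : forall t b r, b <= r -> r <= t -> 1 <= bzN t b r.
Proof. intros. bzcase. apply binom_pos. lia. Qed.

Lemma bzN_mono_b_le : forall d t b r, bzN t (b + d) r <= bzN t b r.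
Proof. induction d; intros. rewrite Nat.add_0_r; lia. rewrite Nat.add_succ_r. eapply Nat.le_trans. apply bzN_mono_b. apply IHd. Qed.

Lemma bzbN_shift : forall t b r, bzbN (S t) (S b) (S r) = bzbN t b r.
Proof. intros. unfold bzbN. simpl. rewrite bzN_shift. reflexivity. Qed.

Lemma bzbN_c3 : forall t b r, b <= r -> bzbN (S t) b (S r) = bzN t b r.
Proof. intros. unfold bzbN. destruct (Nat.eqb_spec (S r) b); [lia|]. rewrite Bool.andb_false_r.
  apply bzN_shift. Qed.

Lemma bzbN_c2 : forall t b r, bzN t b r <= bzN t (S b) (S r) + bzbN t b r.
Proof. intros. unfold bzbN. destruct (Nat.eqb_spec t b); destruct (Nat.eqb_spec r b); subst; cbn [andb].
  - unfold bzN. rewrite Nat.leb_refl, Nat.sub_diag. simpl. lia.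
  - rewrite (bzN_pascal_b b b r) by lia. lia.
  - rewrite (bzN_pascal_b t b b) by lia. lia.
  - rewrite (bzN_pascal_b t b r) by lia. lia.
Qed.

Lemma bzbN_zero_t0 : forall b r, 0 < r -> bzbN 0 b r = 0.
Proof. intros. unfold bzbN. destruct (Nat.eqb_spec 0 b); destruct (Nat.eqb_spec r b); cbn [andb]; try lia;
  apply bzN_zero_t0; lia. Qed.

Lemma bzbN_St00 : forall t, bzbN (S t) 0 0 = 0.
Proof. intros. unfold bzbN. simpl. unfold bzN. simpl. reflexivity. Qed.

Open Scope R_scope.

Lemma sumR_ext : forall m f g, (forall i, (i < m)%nat -> f i = g i) -> sumR m f = sumR m g.
Proof. induction m; intros f g H; simpl; auto. rewrite (IHm f g); [rewrite H; auto|]; intros; apply H; lia. Qed.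

Lemma sumR_le : forall m f g, (forall i, (i < m)%nat -> f i <= g i) -> sumR m f <= sumR m g.
Proof. induction m; intros f g H; simpl; [lra|]. assert (H1 := IHm f g (fun i Hi => H i ltac:(lia))). assert (H2 := H m ltac:(lia)). lra. Qed.

Lemma sumR_nonneg : forall m f, (forall i, (i < m)%nat -> 0 <= f i) -> 0 <= sumR m f.
Proof. induction m; intros f H; simpl; [lra|]. assert (H1 := IHm f (fun i Hi => H i ltac:(lia))). assert (H2 := H m ltac:(lia)). lra. Qed.

Lemma sumR_plus : forall m f g, sumR m (fun i => f i + g i) = sumR m f + sumR m g.
Proof. induction m; intros; simpl; [lra|]. rewrite IHm. lra. Qed.

Lemma sumR_minus : forall m f g, sumR m (fun i => f i - g i) = sumR m f - sumR m g.
Proof. induction m; intros; simpl; [lra|]. rewrite IHm. lra. Qed.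

Lemma sumR_scal_l : forall m c f, sumR m (fun i => c * f i) = c * sumR m f.
Proof. induction m; intros; simpl; [lra|]. rewrite IHm. lra. Qed.

Lemma sumR_scal_r : forall m c f, sumR m (fun i => f i * c) = sumR m f * c.
Proof. induction m; intros; simpl; [lra|]. rewrite IHm. lra. Qed.

Lemma sumR_add : forall b a f, sumR (a + b) f = sumR a f + sumR b (fun i => f (a + i)%nat).
Proof. induction b; intros; simpl. rewrite Nat.add_0_r; lra. rewrite Nat.add_succ_r. simpl. rewrite IHb. lra. Qed.

Lemma sumR_shift : forall m f, sumR (S m) f = f 0%nat + sumR m (fun i => f (S i)).
Proof. intros. replace (S m) with (1 + m)%nat by lia. rewrite sumR_add. simpl. lra. Qed.

Lemma sumR_swap : forall a b f, sumR a (fun i => sumR b (fun j => f i j)) = sumR b (fun j => sumR a (fun i => f i j)).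
Proof. induction a; intros; simpl. induction b; simpl; lra. rewrite IHa. rewrite <- sumR_plus. reflexivity. Qed.

Lemma sumR_mono_range : forall a b f, (a <= b)%nat -> (forall i, (i < b)%nat -> 0 <= f i) -> sumR a f <= sumR b f.
Proof. intros a b f Hab H. replace b with (a + (b - a))%nat by lia. rewrite sumR_add.
  assert (0 <= sumR (b - a) (fun i => f (a + i)%nat)). apply sumR_nonneg; intros; apply H; lia. lra. Qed.

Lemma sumR_single_le : forall m f k, (forall i, (i < m)%nat -> 0 <= f i) -> (k < m)%nat -> f k <= sumR m f.
Proof. intros m f k H Hk. replace m with (S k + (m - S k))%nat by lia. rewrite sumR_add. simpl.
  assert (0 <= sumR k f) by (apply sumR_nonneg; intros; apply H; lia).
  assert (0 <= sumR (m - S k) (fun i => f (S (k + i)))) by (apply sumR_nonneg; intros; apply H; lia). lra. Qed.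

Lemma sumR_zero : forall m f, (forall i, (i < m)%nat -> f i = 0) -> sumR m f = 0.
Proof. induction m; intros f H; simpl; auto. rewrite IHm, H; [lra|lia|]. intros; apply H; lia. Qed.

Lemma sumR_S : forall m f, sumR (S m) f = sumR m f + f m.
Proof. reflexivity. Qed.

Lemma sumR_indicator : forall m k c, (k < m)%nat -> sumR m (fun i => if Nat.eqb i k then c else 0) = c.
Proof. intros m k c Hk. replace m with (S k + (m - S k))%nat by lia. rewrite sumR_add. rewrite sumR_S.
  rewrite (sumR_zero k). rewrite (sumR_zero (m - S k)). rewrite Nat.eqb_refl. lra.
  - intros i0 Hi0; destruct (Nat.eqb_spec (S k+i0) k); [lia|auto].
  - intros i0 Hi0; destruct (Nat.eqb_spec i0 k); [lia|auto]. Qed.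

Lemma sumR_abs : forall m f, Rabs (sumR m f) <= sumR m (fun i => Rabs (f i)).
Proof. induction m; intros; simpl. rewrite Rabs_R0; lra. eapply Rle_trans. apply Rabs_triang. specialize (IHm f). lra. Qed.

Lemma sumR_indicator' : forall m k c, (k < m)%nat -> sumR m (fun i => if Nat.eqb k i then c else 0) = c.
Proof. intros. transitivity (sumR m (fun i => if Nat.eqb i k then c else 0)). apply sumR_ext. intros. rewrite Nat.eqb_sym. reflexivity. apply sumR_indicator; auto. Qed.

Definition Psi (t b r : nat) (ib : bool) : R :=
  if ib then (/2)^(S t) * INR (bzbN t b r) else (/2)^t * INR (bzN t b r).
Definition hh (ib : bool) : R := if ib then 0 else /2.
Definition mu (ib : bool) : R := if ib then 1 else /2.
Definition isbn (ib : bool) : nat := if ib then 1%nat else 0%nat.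

Lemma pow_half_pos : forall t, 0 < (/2)^t.
Proof. intros. apply pow_lt. lra. Qed.

Lemma Psi_nonneg : forall t b r ib, 0 <= Psi t b r ib.
Proof. intros. unfold Psi. assert (H1 := pow_half_pos t). assert (H2 := pow_half_pos (S t)).
  destruct ib; apply Rmult_le_pos; try lra; apply pos_INR. Qed.

Lemma Psi_step : forall t b r ib' ib, (b <= r)%nat ->
  Psi (S t) (b + isbn ib') (S r) ib <= hh ib * Psi t (b + isbn ib') (S r) ib + mu ib' * Psi t b r ib'.
Proof.
  intros t b r ib' ib Hbr. assert (P := pow_half_pos t).
  destruct ib', ib; unfold Psi, hh, mu, isbn; rewrite ?Nat.add_0_r, ?Nat.add_1_r.
  - rewrite bzbN_shift. simpl. assert (0 <= INR (bzbN t b r)) by apply pos_INR. nra.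
  - rewrite bzN_shift. assert (H := bzbN_c2 t b r). apply le_INR in H. rewrite plus_INR in H. simpl. nra.
  - rewrite bzbN_c3 by lia. simpl. assert (0 <= INR (bzN t b r)) by apply pos_INR. nra.
  - rewrite bzN_pascal_t by lia. rewrite plus_INR. simpl. nra.
Qed.

Lemma Psi_base : forall b r ib, (0 < r)%nat -> Psi 0 b r ib = 0.
Proof. intros. unfold Psi. destruct ib; [rewrite bzbN_zero_t0 | rewrite bzN_zero_t0]; auto; simpl; lra. Qed.

Lemma Psi_00 : forall t ib, Psi (S t) 0 0 ib <= hh ib * Psi t 0 0 ib.
Proof. intros. unfold Psi, hh. destruct ib. rewrite bzbN_St00. simpl. lra.
  rewrite !bzN_t00. simpl. lra. Qed.

Lemma Psi_00_le1 : forall ib, Psi 0 0 0 ib <= 1.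
Proof. intros. unfold Psi. destruct ib; unfold bzbN, bzN; simpl; lra. Qed.

Definition cyc (n k : nat) : nat := if (k <? n)%nat then k else (3*n-1-k)%nat.
Definition nxt (n k : nat) : nat := if (k =? 2*n-1)%nat then 0%nat else S k.
Definition flp (n k : nat) : nat := if (k <=? 2*n-2)%nat then (2*n-2-k)%nat else (2*n-1)%nat.
Definition isb (n k : nat) : bool := ((k =? 0) || (k =? n-1) || (k =? n) || (k =? 2*n-1))%nat.
Definition coef (n U k l : nat) : R :=
  (if (l =? k)%nat then hh (isb n k) else 0) +
  (if (l =? nxt n k)%nat then (1 - / INR U) * mu (isb n k) else 0) +
  (if (l =? flp n k)%nat then / INR U * mu (isb n k) else 0).

Ltac natcases := repeat (match goal with
  | |- context [Nat.ltb ?a ?b] => destruct (Nat.ltb_spec a b)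
  | |- context [Nat.leb ?a ?b] => destruct (Nat.leb_spec a b)
  | |- context [Nat.eqb ?a ?b] => destruct (Nat.eqb_spec a b)
  end; try (exfalso; lia)).

Ltac listeq := repeat match goal with
  | |- cons _ _ = cons _ _ => apply f_equal2
  | |- pair _ _ = pair _ _ => apply f_equal2
  end; try reflexivity; try lia; try lra.

Lemma trans_1 : forall n U, (3 <= n)%nat -> trans n U 0 = [(1%nat, 1 - / INR U); ((n+1)%nat, / INR U)].
Proof. intros. unfold trans, unp, prm. cbv zeta. natcases; try lia. listeq. Qed.
Lemma trans_2 : forall n U k, (3 <= n)%nat -> (1 <= k <= n-2)%nat ->
  trans n U k = [(k, 1/2); (S k, 1/2 * (1 - / INR U)); ((n+k+1)%nat, / (2 * INR U))].
Proof. intros. unfold trans, unp, prm. cbv zeta. natcases; try lia. listeq. Qed.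
Lemma trans_3 : forall n U, (3 <= n)%nat -> trans n U (n-1) = [((2*n-1)%nat, 1 - / INR U); ((n-1)%nat, / INR U)].
Proof. intros. unfold trans, unp, prm. cbv zeta. natcases; try lia. listeq. Qed.
Lemma trans_4 : forall n U, (3 <= n)%nat -> trans n U n = [(0%nat, 1 - / INR U); (n, / INR U)].
Proof. intros. unfold trans, unp, prm. cbv zeta. natcases; try lia. listeq. Qed.
Lemma trans_5 : forall n U a, (3 <= n)%nat -> (n+1 <= a <= 2*n-2)%nat ->
  trans n U a = [(a, 1/2); ((a-1)%nat, 1/2 * (1 - / INR U)); ((a-n-1)%nat, / (2 * INR U))].
Proof. intros. unfold trans, unp, prm. cbv zeta. natcases; try lia. listeq. Qed.
Lemma trans_6 : forall n U, (3 <= n)%nat -> trans n U (2*n-1) = [((2*n-2)%nat, 1 - / INR U); ((n-2)%nat, / INR U)].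
Proof. intros. unfold trans, unp, prm. cbv zeta. natcases; try lia. listeq. Qed.

Lemma K_coef : forall n U k l, (3 <= n)%nat -> (1 <= U)%nat -> (k < 2*n)%nat -> (l < 2*n)%nat ->
  coef n U k l <= K n U (cyc n k) (cyc n l).
Proof.
  intros n U k l Hn HU Hk Hl.
  assert (Hu : 0 < / INR U <= 1). { assert (1 <= INR U) by (apply (le_INR 1); lia). split. apply Rinv_0_lt_compat; lra.
    rewrite <- Rinv_1. apply Rinv_le_contravar; lra. }
  assert (E : / (2 * INR U) = / 2 * / INR U). { rewrite Rinv_mult. reflexivity. }
  assert (R : k = 0%nat \/ (1 <= k <= n-2)%nat \/ k = (n-1)%nat \/ k = n \/ (n+1 <= k <= 2*n-2)%nat \/ k = (2*n-1)%nat) by lia.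
  unfold coef.
  destruct R as [R|[R|[R|[R|[R|R]]]]];
  [ replace (cyc n k) with 0%nat by (unfold cyc; natcases; lia);
    replace (nxt n k) with 1%nat by (unfold nxt; natcases; lia);
    replace (flp n k) with (2*n-2)%nat by (unfold flp; natcases; lia);
    replace (isb n k) with true by (unfold isb; natcases; reflexivity);
    unfold K; rewrite trans_1 by lia
  | replace (cyc n k) with k by (unfold cyc; natcases; lia);
    replace (nxt n k) with (S k) by (unfold nxt; natcases; lia);
    replace (flp n k) with (2*n-2-k)%nat by (unfold flp; natcases; lia);
    replace (isb n k) with false by (unfold isb; natcases; reflexivity);
    unfold K; rewrite trans_2 by lia
  | replace (cyc n k) with (n-1)%nat by (unfold cyc; natcases; lia);
    replace (nxt n k) with n by (unfold nxt; natcases; lia);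
    replace (flp n k) with (n-1)%nat by (unfold flp; natcases; lia);
    replace (isb n k) with true by (unfold isb; natcases; reflexivity);
    unfold K; rewrite trans_3 by lia
  | replace (cyc n k) with (2*n-1)%nat by (unfold cyc; natcases; lia);
    replace (nxt n k) with (S n) by (unfold nxt; natcases; lia);
    replace (flp n k) with (n-2)%nat by (unfold flp; natcases; lia);
    replace (isb n k) with true by (unfold isb; natcases; reflexivity);
    unfold K; rewrite trans_6 by lia
  | replace (cyc n k) with (3*n-1-k)%nat by (unfold cyc; natcases; lia);
    replace (nxt n k) with (S k) by (unfold nxt; natcases; lia);
    replace (flp n k) with (2*n-2-k)%nat by (unfold flp; natcases; lia);
    replace (isb n k) with false by (unfold isb; natcases; reflexivity);
    unfold K; rewrite trans_5 by lia
  | replace (cyc n k) with n by (unfold cyc; natcases; lia);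
    replace (nxt n k) with 0%nat by (unfold nxt; natcases; lia);
    replace (flp n k) with (2*n-1)%nat by (unfold flp; natcases; lia);
    replace (isb n k) with true by (unfold isb; natcases; reflexivity);
    unfold K; rewrite trans_4 by lia ];
  cbn [fold_right fst snd]; rewrite ?E; unfold cyc, hh, mu; natcases; lra.
Qed.

Lemma Uinv_bounds : forall U, (1 <= U)%nat -> 0 < / INR U <= 1.
Proof. intros U HU. assert (1 <= INR U) by (apply (le_INR 1); lia). split. apply Rinv_0_lt_compat; lra.
    rewrite <- Rinv_1. apply Rinv_le_contravar; lra. Qed.

Lemma fold_nonneg : forall (L : list (nat * R)) b, Forall (fun p => 0 <= snd p) L ->
  0 <= fold_right (fun p acc => (if Nat.eqb (fst p) b then snd p else 0) + acc) 0 L.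
Proof. induction L; intros b H; simpl. lra. inversion H; subst. specialize (IHL b H3).
  destruct (Nat.eqb (fst a) b); lra. Qed.

Lemma K_nonneg : forall n U a b, (1 <= U)%nat -> 0 <= K n U a b.
Proof. intros n U a b HU. assert (Hu := Uinv_bounds U HU).
  assert (E : / (2 * INR U) = / 2 * / INR U). { rewrite Rinv_mult. reflexivity. }
  unfold K. apply fold_nonneg. unfold trans. cbv zeta. rewrite E.
  destruct (a <? n)%nat; [destruct (a + 1 =? 1)%nat; [|destruct (a+1 =? n)%nat] | destruct (a - n + 1 =? 1)%nat; [|destruct (a - n + 1 =? n)%nat]];
  repeat (apply Forall_cons; [simpl; lra|]); apply Forall_nil. Qed.

Lemma K_rowsum : forall n U a, (3 <= n)%nat -> (1 <= U)%nat -> (a < 2*n)%nat -> sumR (2*n) (fun b => K n U a b) = 1.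
Proof. intros n U a Hn HU Ha. assert (Hu := Uinv_bounds U HU).
  assert (E : / (2 * INR U) = / 2 * / INR U). { rewrite Rinv_mult. reflexivity. }
  assert (R : a = 0%nat \/ (1 <= a <= n-2)%nat \/ a = (n-1)%nat \/ a = n \/ (n+1 <= a <= 2*n-2)%nat \/ a = (2*n-1)%nat) by lia.
  unfold K. destruct R as [R|[R|[R|[R|[R|R]]]]];
  [ subst; rewrite trans_1 by lia | rewrite trans_2 by lia | subst; rewrite trans_3 by lia | subst; rewrite trans_4 by lia
  | rewrite trans_5 by lia | subst; rewrite trans_6 by lia];
  cbn [fold_right fst snd]; rewrite ?sumR_plus, ?sumR_indicator' by lia; rewrite sumR_zero by auto; rewrite ?E; lra.
Qed.

Lemma cyc_lt : forall n k, (k < 2*n)%nat -> (cyc n k < 2*n)%nat.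
Proof. intros. unfold cyc. natcases; lia. Qed.
Lemma cyc_cyc : forall n k, (k < 2*n)%nat -> cyc n (cyc n k) = k.
Proof. intros. unfold cyc. natcases; lia. Qed.
Lemma nxt_lt : forall n k, (0 < n)%nat -> (k < 2*n)%nat -> (nxt n k < 2*n)%nat.
Proof. intros. unfold nxt. natcases; lia. Qed.
Lemma flp_lt : forall n k, (0 < n)%nat -> (k < 2*n)%nat -> (flp n k < 2*n)%nat.
Proof. intros. unfold flp. natcases; lia. Qed.

Definition p0 (n x0 j : nat) : nat := Nat.iter j (nxt n) x0.
Definition pos (n x0 s j : nat) : nat :=
  Nat.iter j (nxt n) (match s with O => x0 | S s' => flp n (p0 n x0 s') end).
Fixpoint bc0 (n x0 j : nat) : nat :=
  match j with O => O | S j' => (bc0 n x0 j' + isbn (isb n (p0 n x0 j')))%nat end.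
Fixpoint bc (n x0 s j : nat) : nat :=
  match j with
  | O => match s with O => O | S s' => bc0 n x0 s end
  | S j' => (bc n x0 s j' + isbn (isb n (pos n x0 s j')))%nat
  end.
Definition wt (U s j : nat) : R :=
  match s with O => (1 - / INR U)^j | S s' => (1 - / INR U)^(s' + j) * / INR U end.
Definition Phi (n U x0 t s j : nat) : R :=
  wt U s j * Psi t (bc n x0 s j) (s + j) (isb n (pos n x0 s j)).
Definition G (n U x0 t a : nat) : R :=
  sumR (S n) (fun s => sumR (2*n) (fun j => if Nat.eqb (pos n x0 s j) (cyc n a) then Phi n U x0 t s j else 0)).

Lemma bc_0 : forall n x0 j, bc n x0 0 j = bc0 n x0 j.
Proof. induction j; simpl; auto. Qed.

Lemma bc_le : forall n x0 s j, (bc n x0 s j <= s + j)%nat.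
Proof. assert (H0 : forall n x0 j, (bc0 n x0 j <= j)%nat).
  { induction j; simpl; auto. destruct (isb n (p0 n x0 j)); simpl; lia. }
  induction j; simpl. destruct s; [lia| rewrite Nat.add_0_r; apply H0]. destruct (isb n (pos n x0 s j)); simpl; lia. Qed.

Lemma wt_nonneg : forall U s j, (1 <= U)%nat -> 0 <= wt U s j.
Proof. intros. assert (Hu := Uinv_bounds U H). unfold wt. destruct s; [apply pow_le; lra|].
  apply Rmult_le_pos; [apply pow_le|]; lra. Qed.

Lemma Phi_nonneg : forall n U x0 t s j, (1 <= U)%nat -> 0 <= Phi n U x0 t s j.
Proof. intros. unfold Phi. apply Rmult_le_pos. apply wt_nonneg; auto. apply Psi_nonneg. Qed.

Lemma Phi_move : forall n U x0 t s j, (1 <= U)%nat ->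
  Phi n U x0 (S t) s (S j) <= hh (isb n (pos n x0 s (S j))) * Phi n U x0 t s (S j)
     + (1 - / INR U) * mu (isb n (pos n x0 s j)) * Phi n U x0 t s j.
Proof. intros n U x0 t s j HU. assert (Hu := Uinv_bounds U HU). unfold Phi.
  assert (Hw : wt U s (S j) = wt U s j * (1 - / INR U)).
  { unfold wt. destruct s. simpl. ring. rewrite Nat.add_succ_r. simpl. ring. }
  rewrite Hw. replace (s + S j)%nat with (S (s + j)) by lia. cbn [bc].
  assert (P := Psi_step t (bc n x0 s j) (s + j) (isb n (pos n x0 s j)) (isb n (pos n x0 s (S j))) (bc_le n x0 s j)).
  assert (W := wt_nonneg U s j HU).
  assert (0 <= 1 - / INR U) by lra.
  apply Rmult_le_compat_l with (r := wt U s j * (1 - / INR U)) in P; [|apply Rmult_le_pos; lra].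
  eapply Rle_trans. apply P. apply Req_le. ring. Qed.

Lemma Phi_flip : forall n U x0 t s, (1 <= U)%nat ->
  Phi n U x0 (S t) (S s) 0 <= hh (isb n (pos n x0 (S s) 0)) * Phi n U x0 t (S s) 0
     + / INR U * mu (isb n (pos n x0 0 s)) * Phi n U x0 t 0 s.
Proof. intros n U x0 t s HU. assert (Hu := Uinv_bounds U HU). unfold Phi.
  assert (Hw : wt U (S s) 0 = wt U 0 s * / INR U). { unfold wt. rewrite Nat.add_0_r. reflexivity. }
  rewrite Hw. replace (S s + 0)%nat with (S (0 + s)) by lia.
  assert (Hb : bc n x0 (S s) 0 = (bc n x0 0 s + isbn (isb n (pos n x0 0 s)))%nat).
  { simpl. rewrite bc_0. reflexivity. }
  rewrite Hb.
  assert (P := Psi_step t (bc n x0 0 s) (0 + s) (isb n (pos n x0 0 s)) (isb n (pos n x0 (S s) 0)) (bc_le n x0 0 s)).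
  assert (W := wt_nonneg U 0 s HU).
  apply Rmult_le_compat_l with (r := wt U 0 s * / INR U) in P; [|apply Rmult_le_pos; lra].
  eapply Rle_trans. apply P. apply Req_le. ring. Qed.

Lemma Phi_00 : forall n U x0 t, Phi n U x0 (S t) 0 0 <= hh (isb n (pos n x0 0 0)) * Phi n U x0 t 0 0.
Proof. intros. unfold Phi, wt. simpl pow. simpl bc. rewrite !Rmult_1_l. apply Psi_00. Qed.

Lemma Phi_base : forall n U x0 s j, (0 < s + j)%nat -> Phi n U x0 0 s j = 0.
Proof. intros. unfold Phi. rewrite Psi_base by auto. ring. Qed.

Lemma Phi_00_le1 : forall n U x0, Phi n U x0 0 0 0 <= 1.
Proof. intros. unfold Phi, wt. simpl pow. simpl bc. rewrite Rmult_1_l. apply Psi_00_le1. Qed.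

Lemma step_star : forall n U x0 t l, (1 <= n)%nat -> (1 <= U)%nat ->
  sumR (S n) (fun s => sumR (2*n) (fun j => if Nat.eqb (pos n x0 s j) l then Phi n U x0 (S t) s j else 0))
  <= sumR (S n) (fun s => sumR (2*n) (fun j => Phi n U x0 t s j * coef n U (pos n x0 s j) l)).
Proof.
  intros n U x0 t l Hn HU. assert (Hu := Uinv_bounds U HU).
  set (P := fun s j => Phi n U x0 t s j).
  set (Af := fun s j => if Nat.eqb (pos n x0 s j) l then hh (isb n (pos n x0 s j)) * P s j else 0).
  set (pre := fun s j => if Nat.eqb (pos n x0 s j) l then
     match j with S j' => (1 - / INR U) * mu (isb n (pos n x0 s j')) * P s j'
     | O => match s with S s' => / INR U * mu (isb n (pos n x0 0 s')) * P 0%nat s' | O => 0 end end else 0).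
  set (Mf := fun s j => P s j * (if Nat.eqb l (nxt n (pos n x0 s j)) then (1 - / INR U) * mu (isb n (pos n x0 s j)) else 0)).
  set (Ff := fun s j => P s j * (if Nat.eqb l (flp n (pos n x0 s j)) then / INR U * mu (isb n (pos n x0 s j)) else 0)).
  assert (HP : forall s j, 0 <= P s j) by (intros; apply Phi_nonneg; auto).
  assert (HM : forall s j, 0 <= Mf s j). { intros. unfold Mf. apply Rmult_le_pos; auto. destruct (Nat.eqb _ _); [|lra].
    apply Rmult_le_pos; [lra| unfold mu; destruct (isb _ _); lra]. }
  assert (HF : forall s j, 0 <= Ff s j). { intros. unfold Ff. apply Rmult_le_pos; auto. destruct (Nat.eqb _ _); [|lra].
    apply Rmult_le_pos; [lra| unfold mu; destruct (isb _ _); lra]. }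
  apply Rle_trans with (sumR (S n) (fun s => sumR (2*n) (fun j => Af s j + pre s j))).
  { apply sumR_le; intros s Hs; apply sumR_le; intros j Hj. unfold Af, pre.
    destruct (Nat.eqb (pos n x0 s j) l); [|lra]. destruct j.
    - destruct s. rewrite Rplus_0_r. apply Phi_00. apply Phi_flip; auto.
    - apply Phi_move; auto. }
  apply Rle_trans with (sumR (S n) (fun s => sumR (2*n) (fun j => Af s j + (Mf s j + Ff s j)))).
  2:{ apply sumR_le; intros s Hs; apply sumR_le; intros j Hj. unfold Af, Mf, Ff, P, coef.
      destruct (Nat.eqb_spec (pos n x0 s j) l); destruct (Nat.eqb_spec l (pos n x0 s j)); try lia; lra. }
  assert (E1 : sumR (S n) (fun s => sumR (2*n) (fun j => Af s j + pre s j)) =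
     sumR (S n) (fun s => sumR (2*n) (fun j => Af s j)) + sumR (S n) (fun s => sumR (2*n) (fun j => pre s j))).
  { rewrite <- sumR_plus. apply sumR_ext; intros; apply sumR_plus. }
  assert (E2 : sumR (S n) (fun s => sumR (2*n) (fun j => Af s j + (Mf s j + Ff s j))) =
     sumR (S n) (fun s => sumR (2*n) (fun j => Af s j)) + (sumR (S n) (fun s => sumR (2*n) (fun j => Mf s j))
      + sumR (S n) (fun s => sumR (2*n) (fun j => Ff s j)))).
  { rewrite <- !sumR_plus. apply sumR_ext; intros. rewrite <- !sumR_plus. reflexivity. }
  rewrite E1, E2. apply Rplus_le_compat_l.
  assert (Hrow : forall s, sumR (2*n) (fun j => pre s j) <= pre s 0%nat + sumR (2*n) (fun j => Mf s j)).
  { intros s. replace (2*n)%nat with (S (2*n-1)) by lia. rewrite sumR_shift. apply Rplus_le_compat_l.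
    apply Rle_trans with (sumR (2*n-1) (fun j => Mf s j)).
    - apply Req_le, sumR_ext. intros j Hj. unfold pre, Mf. simpl pos. change (pos n x0 s (S j)) with (nxt n (pos n x0 s j)).
      destruct (Nat.eqb_spec (nxt n (pos n x0 s j)) l); destruct (Nat.eqb_spec l (nxt n (pos n x0 s j))); try lia; lra.
    - rewrite sumR_S. specialize (HM s (2*n-1)%nat). lra. }
  apply Rle_trans with (sumR (S n) (fun s => pre s 0%nat) + sumR (S n) (fun s => sumR (2*n) (fun j => Mf s j))).
  { rewrite <- sumR_plus. apply sumR_le. intros; apply Hrow. }
  rewrite Rplus_comm. apply Rplus_le_compat_l.
  rewrite sumR_shift. replace (pre 0%nat 0%nat) with 0 by (unfold pre; destruct (Nat.eqb _ _); reflexivity).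
  rewrite Rplus_0_l.
  apply Rle_trans with (sumR (2*n) (fun j => Ff 0%nat j)).
  - apply Rle_trans with (sumR n (fun j => Ff 0%nat j)).
    + apply Req_le, sumR_ext. intros s Hs. unfold pre, Ff. change (pos n x0 (S s) 0) with (flp n (pos n x0 0 s)).
      destruct (Nat.eqb_spec (flp n (pos n x0 0 s)) l); destruct (Nat.eqb_spec l (flp n (pos n x0 0 s))); try lia; lra.
    + apply sumR_mono_range. lia. intros; apply HF.
  - rewrite (sumR_shift n). assert (0 <= sumR n (fun s => sumR (2 * n) (fun j => Ff (S s) j))).
    { apply sumR_nonneg; intros; apply sumR_nonneg; intros; apply HF. } lra.
Qed.

Definition ev (x : nat) : nat -> R := fun a => if Nat.eqb a x then 1 else 0.

Lemma cyc_eqb : forall n p a, (p < 2*n)%nat -> (a < 2*n)%nat -> Nat.eqb p (cyc n a) = Nat.eqb a (cyc n p).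
Proof. intros. unfold cyc. natcases; auto; lia. Qed.

Lemma sum_cyc_ind : forall n p c g, (p < 2*n)%nat ->
  sumR (2*n) (fun a => (if Nat.eqb p (cyc n a) then c else 0) * g a) = c * g (cyc n p).
Proof. intros. rewrite <- (sumR_indicator (2*n) (cyc n p) (c * g (cyc n p))) by (apply cyc_lt; auto).
  apply sumR_ext. intros a Ha. rewrite cyc_eqb by auto. destruct (Nat.eqb_spec a (cyc n p)); subst; lra. Qed.

Lemma iter_lt : forall n j k, (0 < n)%nat -> (k < 2*n)%nat -> (Nat.iter j (nxt n) k < 2*n)%nat.
Proof. induction j; intros; simpl; auto. apply nxt_lt; auto. Qed.

Lemma pos_lt : forall n x0 s j, (0 < n)%nat -> (x0 < 2*n)%nat -> (pos n x0 s j < 2*n)%nat.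
Proof. intros. unfold pos. apply iter_lt; auto. destruct s; auto. apply flp_lt; auto. apply iter_lt; auto. Qed.

Lemma barrier : forall n U x t a, (3 <= n)%nat -> (1 <= U)%nat -> (x < 2*n)%nat -> (a < 2*n)%nat ->
  G n U (cyc n x) t a <= zt n U (ev x) t a.
Proof.
  intros n U x t. revert x. induction t; intros x a Hn HU Hx Ha.
  - simpl. unfold G. rewrite sumR_shift. rewrite (sumR_zero n).
    2:{ intros s Hs. apply sumR_zero. intros j Hj. rewrite Phi_base by lia. destruct (Nat.eqb _ _); auto. }
    replace (2*n)%nat with (S (2*n-1)) by lia. rewrite sumR_shift. rewrite sumR_zero.
    2:{ intros j Hj. rewrite Phi_base by lia. destruct (Nat.eqb _ _); auto. }
    unfold ev. assert (H1 := Phi_00_le1 n U (cyc n x)). assert (H2 := Phi_nonneg n U (cyc n x) 0 0 0 HU).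
    change (pos n (cyc n x) 0 0) with (cyc n x).
    destruct (Nat.eqb_spec (cyc n x) (cyc n a)).
    + assert (a = x). { rewrite <- (cyc_cyc n a), <- (cyc_cyc n x) by auto. congruence. }
      subst. rewrite Nat.eqb_refl. lra.
    + destruct (Nat.eqb a x); lra.
  - set (x0 := cyc n x). assert (Hx0 : (x0 < 2*n)%nat) by (apply cyc_lt; auto).
    simpl zt.
    apply Rle_trans with (sumR (2*n) (fun a' => G n U x0 t a' * K n U a' a)).
    2:{ apply sumR_le. intros a' Ha'. apply Rmult_le_compat_r. apply K_nonneg; auto. apply IHt; auto. }
    unfold G.
    assert (E : sumR (2*n) (fun a' => sumR (S n) (fun s => sumR (2*n) (fun j =>
         if Nat.eqb (pos n x0 s j) (cyc n a') then Phi n U x0 t s j else 0)) * K n U a' a)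
       = sumR (S n) (fun s => sumR (2*n) (fun j => Phi n U x0 t s j * K n U (cyc n (pos n x0 s j)) a))).
    { transitivity (sumR (2*n) (fun a' => sumR (S n) (fun s => sumR (2*n) (fun j =>
         (if Nat.eqb (pos n x0 s j) (cyc n a') then Phi n U x0 t s j else 0) * K n U a' a)))).
      { apply sumR_ext; intros. rewrite <- sumR_scal_r. apply sumR_ext; intros. rewrite <- sumR_scal_r. reflexivity. }
      rewrite sumR_swap. apply sumR_ext; intros s Hs. rewrite sumR_swap. apply sumR_ext; intros j Hj.
      apply sum_cyc_ind. apply pos_lt; auto; lia. }
    rewrite E. eapply Rle_trans. apply step_star with (l := cyc n a); lia.
    apply sumR_le; intros s Hs; apply sumR_le; intros j Hj.
    apply Rmult_le_compat_l. apply Phi_nonneg; auto.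
    rewrite <- (cyc_cyc n a) at 2 by auto. apply K_coef; auto. apply pos_lt; auto; lia. apply cyc_lt; auto.
Qed.

Lemma iter_wrap : forall n j k, (0 < n)%nat -> (k < 2*n)%nat -> (j < 2*n)%nat ->
  Nat.iter j (nxt n) k = if (k + j <? 2*n)%nat then (k + j)%nat else (k + j - 2*n)%nat.
Proof. induction j; intros k Hn Hk Hj. simpl. natcases; lia.
  change (Nat.iter (S j) (nxt n) k) with (nxt n (Nat.iter j (nxt n) k)). rewrite IHj by lia.
  unfold nxt. natcases; lia. Qed.

Fixpoint natsum (L : nat) (f : nat -> nat) : nat :=
  match L with O => O | S L' => (natsum L' f + f L')%nat end.

Lemma natsum_le : forall L f g, (forall i, (i < L)%nat -> (f i <= g i)%nat) -> (natsum L f <= natsum L g)%nat.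
Proof. induction L; intros; simpl; auto. specialize (IHL f g (fun i Hi => H i ltac:(lia))). specialize (H L ltac:(lia)). lia. Qed.

Lemma natsum_plus : forall L f g, natsum L (fun i => f i + g i)%nat = (natsum L f + natsum L g)%nat.
Proof. induction L; intros; simpl; auto. rewrite IHL. lia. Qed.

Lemma natsum_ind1 : forall L i0, (natsum L (fun i => if Nat.eqb i i0 then 1 else 0) <= 1)%nat.
Proof. assert (forall L i0, (natsum L (fun i => if Nat.eqb i i0 then 1 else 0) <= if (i0 <? L)%nat then 1 else 0)%nat).
  { induction L; intros; simpl; auto. specialize (IHL i0). revert IHL. natcases; lia. }
  intros. specialize (H L i0). destruct (i0 <? L)%nat; lia. Qed.

Definition cnt (n k L : nat) : nat := natsum L (fun i => isbn (isb n (Nat.iter i (nxt n) k))).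

Lemma isbn_split : forall n q, (3 <= n)%nat ->
  (isbn (isb n q) <= (if Nat.eqb q 0 then 1 else 0) + (if Nat.eqb q (n-1) then 1 else 0)
     + ((if Nat.eqb q n then 1 else 0) + (if Nat.eqb q (2*n-1) then 1 else 0)))%nat.
Proof. intros. unfold isb, isbn. destruct (Nat.eqb q 0), (Nat.eqb q (n-1)), (Nat.eqb q n), (Nat.eqb q (2*n-1)); simpl; lia. Qed.

Lemma wrap_ind : forall n k i c, (k < 2*n)%nat -> (i < 2*n)%nat -> (c < 2*n)%nat ->
  ((if Nat.eqb (if (k + i <? 2*n)%nat then (k + i)%nat else (k + i - 2*n)%nat) c then 1 else 0)
   <= if Nat.eqb i (if (k <=? c)%nat then (c - k)%nat else (c + 2*n - k)%nat) then 1 else 0)%nat.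
Proof. intros. natcases; lia. Qed.

Lemma cnt_le4 : forall n k L, (3 <= n)%nat -> (k < 2*n)%nat -> (L <= 2*n)%nat -> (cnt n k L <= 4)%nat.
Proof. intros n k L Hn Hk HL. unfold cnt.
  set (ic := fun c => if (k <=? c)%nat then (c - k)%nat else (c + 2*n - k)%nat).
  apply Nat.le_trans with (natsum L (fun i => (if Nat.eqb i (ic 0%nat) then 1 else 0) + (if Nat.eqb i (ic (n-1)%nat) then 1 else 0)
      + ((if Nat.eqb i (ic n) then 1 else 0) + (if Nat.eqb i (ic (2*n-1)%nat) then 1 else 0)))%nat).
  - apply natsum_le. intros i Hi. rewrite iter_wrap by lia. eapply Nat.le_trans. apply isbn_split; auto.
    unfold ic; cbv beta. assert (W := wrap_ind n k i). 
    assert (W1 := W 0%nat ltac:(lia) ltac:(lia) ltac:(lia)). assert (W2 := W (n-1)%nat ltac:(lia) ltac:(lia) ltac:(lia)).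
    assert (W3 := W n ltac:(lia) ltac:(lia) ltac:(lia)). assert (W4 := W (2*n-1)%nat ltac:(lia) ltac:(lia) ltac:(lia)). lia.
  - rewrite !natsum_plus. assert (A1 := natsum_ind1 L (ic 0%nat)). assert (A2 := natsum_ind1 L (ic (n-1)%nat)).
    assert (A3 := natsum_ind1 L (ic n)). assert (A4 := natsum_ind1 L (ic (2*n-1)%nat)). lia.
Qed.

Lemma bc0_cnt : forall n x0 j, bc0 n x0 j = cnt n x0 j.
Proof. induction j; simpl; auto. rewrite IHj. reflexivity. Qed.

Lemma bc_cnt : forall n x0 s j, bc n x0 (S s) j = (cnt n x0 (S s) + cnt n (flp n (p0 n x0 s)) j)%nat.
Proof. induction j.
  - cbn [bc]. rewrite bc0_cnt. change (cnt n (flp n (p0 n x0 s)) 0) with 0%nat. lia.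
  - cbn [bc]. rewrite IHj.
    change (cnt n (flp n (p0 n x0 s)) (S j)) with (cnt n (flp n (p0 n x0 s)) j + isbn (isb n (Nat.iter j (nxt n) (flp n (p0 n x0 s)))))%nat.
    unfold pos. lia. Qed.

Lemma bc_le8 : forall n x0 s j, (3 <= n)%nat -> (x0 < 2*n)%nat -> (s < n)%nat -> (j <= 2*n)%nat -> (bc n x0 (S s) j <= 8)%nat.
Proof. intros. rewrite bc_cnt. assert (cnt n x0 (S s) <= 4)%nat by (apply cnt_le4; lia).
  assert (cnt n (flp n (p0 n x0 s)) j <= 4)%nat. { apply cnt_le4; try lia. apply flp_lt; try lia. apply iter_lt; lia. } lia. Qed.

Lemma pow_decr : forall a i j, 0 <= a <= 1 -> (i <= j)%nat -> a ^ j <= a ^ i.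
Proof. intros a i j Ha Hij. replace j with (i + (j - i))%nat by lia. rewrite pow_add.
  assert (0 <= a ^ i) by (apply pow_le; lra).
  assert (a ^ (j - i) <= 1). { clear Hij. induction (j - i)%nat; simpl. lra.
    assert (0 <= a ^ n) by (apply pow_le; lra). nra. }
  assert (0 <= a ^ (j - i)) by (apply pow_le; lra). nra. Qed.

Definition Jf (n x0 y s : nat) : nat :=
  let f := flp n (p0 n x0 s) in if (f <=? y)%nat then (y - f)%nat else (y + 2*n - f)%nat.

Lemma Jf_lt : forall n x0 y s, (0 < n)%nat -> (x0 < 2*n)%nat -> (y < 2*n)%nat -> (Jf n x0 y s < 2*n)%nat.
Proof. intros. unfold Jf. assert (flp n (p0 n x0 s) < 2*n)%nat by (apply flp_lt; auto; apply iter_lt; auto).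
  natcases; lia. Qed.

Lemma pos_Jf : forall n x0 y s, (0 < n)%nat -> (x0 < 2*n)%nat -> (y < 2*n)%nat -> pos n x0 (S s) (Jf n x0 y s) = y.
Proof. intros. assert (Hf : (flp n (p0 n x0 s) < 2*n)%nat) by (apply flp_lt; auto; apply iter_lt; auto).
  unfold pos. rewrite iter_wrap; auto. 2:{ apply Jf_lt; auto. } unfold Jf. natcases; lia. Qed.

Lemma Phi_lower : forall n U x0 y s, (3 <= n)%nat -> (1 <= U)%nat -> (x0 < 2*n)%nat -> (y < 2*n)%nat ->
  isb n y = false -> (s < n)%nat ->
  / INR U * (1 - / INR U)^(3*n+8) * (/2)^(3*n+8) * INR (bzN (3*n+8) 8 (S s + Jf n x0 y s))
    <= Phi n U x0 (3*n+8) (S s) (Jf n x0 y s) /\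
  / INR U * (1 - / INR U)^(3*n+8) * (/2)^(3*n+8) <= Phi n U x0 (3*n+8) (S s) (Jf n x0 y s).
Proof. intros n U x0 y s Hn HU Hx0 Hy Hib Hs. assert (Hu := Uinv_bounds U HU).
  assert (HJ := Jf_lt n x0 y s ltac:(lia) Hx0 Hy).
  unfold Phi. rewrite pos_Jf by lia. rewrite Hib. unfold Psi, wt.
  set (J := Jf n x0 y s) in *. set (m := (3*n+8)%nat).
  assert (Hw : (1 - / INR U) ^ m <= (1 - / INR U) ^ (s + J)) by (apply pow_decr; lra || lia).
  assert (H2 := pow_half_pos m). assert (H3 : 0 <= (1 - / INR U) ^ m) by (apply pow_le; lra).
  assert (Hb8 := bc_le8 n x0 s J Hn Hx0 Hs ltac:(lia)).
  assert (Hbr := bc_le n x0 (S s) J).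
  set (b := bc n x0 (S s) J) in *.
  assert (HB1 : (bzN m 8 (S s + J) <= bzN m b (S s + J))%nat).
  { replace 8%nat with (b + (8 - b))%nat by lia. apply bzN_mono_b_le. }
  assert (HB2 : (1 <= bzN m b (S s + J))%nat) by (apply bzN_pos; lia).
  apply le_INR in HB1. apply le_INR in HB2. simpl INR in HB2.
  assert (0 <= INR (bzN m 8 (S s + J))) by apply pos_INR.
  split.
  - apply Rle_trans with (/ INR U * (1 - / INR U) ^ m * (/ 2) ^ m * INR (bzN m b (S s + J))).
    + apply Rmult_le_compat_l; auto. apply Rmult_le_pos; [apply Rmult_le_pos|]; lra.
    + assert (0 <= / INR U * (/ 2) ^ m * INR (bzN m b (S s + J))) by (apply Rmult_le_pos; [apply Rmult_le_pos|]; lra).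
      replace (/ INR U * (1 - / INR U) ^ m * (/ 2) ^ m * INR (bzN m b (S s + J))) with
        ((1 - / INR U) ^ m * (/ INR U * (/ 2) ^ m * INR (bzN m b (S s + J)))) by ring.
      replace ((1 - / INR U) ^ (s + J) * / INR U * ((/ 2) ^ m * INR (bzN m b (S s + J)))) with
        ((1 - / INR U) ^ (s + J) * (/ INR U * (/ 2) ^ m * INR (bzN m b (S s + J)))) by ring.
      apply Rmult_le_compat_r; auto.
  - assert (0 <= / INR U * (/ 2) ^ m) by (apply Rmult_le_pos; lra).
    replace (/ INR U * (1 - / INR U) ^ m * (/ 2) ^ m) with ((1 - / INR U) ^ m * (/ INR U * (/ 2) ^ m) * 1) by ring.
    replace ((1 - / INR U) ^ (s + J) * / INR U * ((/ 2) ^ m * INR (bzN m b (S s + J)))) with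
        ((1 - / INR U) ^ (s + J) * (/ INR U * (/ 2) ^ m) * INR (bzN m b (S s + J))) by ring.
    apply Rmult_le_compat; try lra. apply Rmult_le_pos; lra. apply Rmult_le_compat_r; lra.
exact HB2. Qed.

Lemma zt_lower : forall n U x y, (3 <= n)%nat -> (1 <= U)%nat -> (x < 2*n)%nat -> (y < 2*n)%nat -> isb n y = false ->
  / INR U * (1 - / INR U)^(3*n+8) * (/2)^(3*n+8) *
    sumR n (fun s => INR (bzN (3*n+8) 8 (S s + Jf n (cyc n x) y s))) <= zt n U (ev x) (3*n+8) (cyc n y) /\
  / INR U * (1 - / INR U)^(3*n+8) * (/2)^(3*n+8) <= zt n U (ev x) (3*n+8) (cyc n y).
Proof. intros n U x y Hn HU Hx Hy Hib.
  assert (Hx0 : (cyc n x < 2*n)%nat) by (apply cyc_lt; auto).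
  assert (HB := barrier n U x (3*n+8) (cyc n y) Hn HU Hx (cyc_lt n y Hy)).
  unfold G in HB. rewrite cyc_cyc in HB by auto. rewrite sumR_shift in HB.
  set (x0 := cyc n x) in *.
  assert (R0 : 0 <= sumR (2 * n) (fun j => if Nat.eqb (pos n x0 0 j) y then Phi n U x0 (3 * n + 8) 0 j else 0)).
  { apply sumR_nonneg. intros. destruct (Nat.eqb _ _); [apply Phi_nonneg; auto| lra]. }
  assert (R1 : sumR n (fun s => Phi n U x0 (3*n+8) (S s) (Jf n x0 y s)) <=
     sumR n (fun s => sumR (2 * n) (fun j => if Nat.eqb (pos n x0 (S s) j) y then Phi n U x0 (3 * n + 8) (S s) j else 0))).
  { apply sumR_le. intros s Hs.
    eapply Rle_trans with (r2 := (fun j => if Nat.eqb (pos n x0 (S s) j) y then Phi n U x0 (3 * n + 8) (S s) j else 0) (Jf n x0 y s)).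
    - simpl. rewrite pos_Jf by lia. rewrite Nat.eqb_refl. lra.
    - apply (sumR_single_le (2*n) (fun j => if Nat.eqb (pos n x0 (S s) j) y then Phi n U x0 (3*n+8) (S s) j else 0) (Jf n x0 y s)).
      intros. destruct (Nat.eqb _ _); [apply Phi_nonneg; auto| lra]. apply Jf_lt; lia. }
  split.
  - rewrite <- sumR_scal_l. eapply Rle_trans; [|apply HB]. eapply Rle_trans; [|apply Rplus_le_compat_l; apply R1].
    apply Rle_trans with (sumR n (fun s => Phi n U x0 (3*n+8) (S s) (Jf n x0 y s))); [|lra].
    apply sumR_le. intros s Hs. apply (Phi_lower n U x0 y s); auto.
  - eapply Rle_trans; [|apply HB]. eapply Rle_trans; [|apply Rplus_le_compat_l; apply R1].
    apply Rle_trans with (sumR n (fun s => Phi n U x0 (3*n+8) (S s) (Jf n x0 y s))); [|lra].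
    eapply Rle_trans; [|apply (sumR_single_le n (fun s => Phi n U x0 (3*n+8) (S s) (Jf n x0 y s)) 0%nat)].
    + apply (Phi_lower n U x0 y 0); auto; lia.
    + intros; apply Phi_nonneg; auto.
    + lia.
Qed.

Lemma r_formula : forall n x0 y s, (3 <= n)%nat -> (x0 < 2*n)%nat -> (y < 2*n)%nat -> (s < n)%nat ->
  (S s + Jf n x0 y s = if (Jf n x0 y 0 + s <? 2*n) then Jf n x0 y 0 + 2*s + 1 else Jf n x0 y 0 + 2*s + 1 - 2*n)%nat.
Proof. intros. unfold Jf, p0. rewrite (iter_wrap n s) by lia. simpl Nat.iter. unfold flp. natcases; lia. Qed.

Lemma pair_sum : forall L (h : nat -> R) b, sumR L (fun i => h (b + 2*i)%nat + h (b + 2*i + 1)%nat) = sumR (2*L) (fun k => h (b + k)%nat).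
Proof. induction L; intros. simpl; reflexivity. rewrite sumR_S, IHL. replace (2 * S L)%nat with (S (S (2*L))) by lia.
  rewrite !sumR_S. replace (b + S (2*L))%nat with (b + 2*L + 1)%nat by lia. lra. Qed.

Lemma window_sub : forall n (h : nat -> R) b, (1 <= b <= n+1)%nat -> (forall k, 0 <= h k) ->
  sumR n (fun k => h (n + 1 + k)%nat) <= sumR (2*n) (fun k => h (b + k)%nat).
Proof. intros n h b Hb Hh. replace (2*n)%nat with ((n+1-b) + n + (b-1))%nat by lia.
  rewrite !sumR_add. assert (0 <= sumR (n + 1 - b) (fun k => h (b + k)%nat)) by (apply sumR_nonneg; auto).
  assert (0 <= sumR (b - 1) (fun i => h (b + (n + 1 - b + n + i))%nat)) by (apply sumR_nonneg; auto).
  replace (sumR n (fun i => h (b + (n + 1 - b + i))%nat)) with (sumR n (fun k => h (n + 1 + k)%nat)).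
  lra. apply sumR_ext. intros. f_equal. lia. Qed.

Lemma sum_to_window : forall n x0 y, (3 <= n)%nat -> (x0 < 2*n)%nat -> (y < 2*n)%nat ->
  sumR n (fun k => INR (bzN (3*n+8) 9 (n + 1 + k))) <= sumR n (fun s => INR (bzN (3*n+8) 8 (S s + Jf n x0 y s))).
Proof. intros n x0 y Hn Hx0 Hy. set (m := (3*n+8)%nat). set (h := fun k => INR (bzN m 9 k)).
  assert (Hh : forall k, 0 <= h k) by (intros; apply pos_INR).
  assert (Hp : forall r, INR (bzN m 8 r) = h r + h (S r)).
  { intros. unfold h. rewrite <- plus_INR. f_equal. rewrite (bzN_pascal_b m 8 r) by lia. lia. }
  set (a := Jf n x0 y 0).
  assert (Ha : (a < 2*n)%nat) by (apply Jf_lt; lia).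
  destruct (Nat.le_gt_cases (a + n) (2*n)) as [HA|HB].
  -
    assert (E : sumR n (fun s => INR (bzN m 8 (S s + Jf n x0 y s))) = sumR (2*n) (fun k => h (a + 1 + k)%nat)).
    { rewrite <- pair_sum. apply sumR_ext. intros s Hs. rewrite Hp. rewrite r_formula by lia. fold a.
      destruct (Nat.ltb_spec (a + s) (2*n)); [|lia]. f_equal; f_equal; lia. }
    rewrite E. apply (window_sub n h); auto. lia.
  - set (s0 := (2*n - a)%nat).
    assert (E : sumR n (fun s => INR (bzN m 8 (S s + Jf n x0 y s))) = sumR (2*n) (fun k => h (2*n - a + 1 + k)%nat)).
    { replace n with (s0 + (n - s0))%nat at 1 by lia. rewrite sumR_add.
      replace (sumR (2*n) (fun k => h (2*n - a + 1 + k)%nat)) with (sumR (2*(n - s0) + 2*s0) (fun k => h (2*n - a + 1 + k)%nat)) by (f_equal; lia).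
      rewrite sumR_add.
      assert (B1 : sumR s0 (fun s => INR (bzN m 8 (S s + Jf n x0 y s))) = sumR (2*s0) (fun k => h (a + 1 + k)%nat)).
      { rewrite <- pair_sum. apply sumR_ext. intros s Hs. rewrite Hp. rewrite r_formula by (unfold s0 in Hs; lia). fold a.
        destruct (Nat.ltb_spec (a + s) (2*n)); [|unfold s0 in Hs; lia]. f_equal; f_equal; lia. }
      assert (B2 : sumR (n - s0) (fun i => INR (bzN m 8 (S (s0 + i) + Jf n x0 y (s0 + i)))) = sumR (2*(n-s0)) (fun k => h (2*n - a + 1 + k)%nat)).
      { rewrite <- pair_sum. apply sumR_ext. intros i Hi. rewrite Hp. rewrite r_formula by lia. fold a.
        destruct (Nat.ltb_spec (a + (s0 + i)) (2*n)); [unfold s0 in *; lia|]. f_equal; f_equal; unfold s0; lia. }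
      assert (B3 : sumR (2*s0) (fun i => h (2*n - a + 1 + (2*(n - s0) + i))%nat) = sumR (2*s0) (fun k => h (a + 1 + k)%nat)).
      { apply sumR_ext. intros. f_equal. unfold s0; lia. }
      rewrite B1, B2, B3. lra. }
    rewrite E. apply (window_sub n h); auto. lia.
Qed.

Lemma binom_thm : forall L x, sumR (S L) (fun j => INR (binom L j) * x^j) = (1+x)^L.
Proof. induction L; intros x.
  - simpl. lra.
  - rewrite sumR_shift. rewrite binom_0. simpl pow at 1.
    transitivity (1 + (x * sumR (S L) (fun j => INR (binom L j) * x^j)
                 + sumR (S L) (fun j => INR (binom L (S j)) * x^(S j)))).
    { f_equal. simpl; lra. rewrite <- sumR_scal_l, <- sumR_plus. apply sumR_ext. intros j Hj.
      rewrite binom_SS, plus_INR. simpl pow. ring. }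
    assert (E : sumR (S L) (fun j => INR (binom L (S j)) * x^(S j)) = sumR (S L) (fun j => INR (binom L j) * x^j) - 1).
    { assert (E1 := sumR_shift (S L) (fun j => INR (binom L j) * x^j)).
      assert (E2 := sumR_S (S L) (fun j => INR (binom L j) * x^j)).
      rewrite E2 in E1. cbv beta in E1. rewrite (binom_gt L (S L)) in E1 by lia. rewrite binom_0 in E1.
      simpl INR in E1. rewrite pow_O in E1. lra. }
    rewrite E, IHL. simpl. ring.
Qed.

Lemma half_pow_ge1 : forall j T, (j <= T)%nat -> 1 <= (/2)^j * 2^T.
Proof. intros. replace T with (j + (T - j))%nat by lia. rewrite pow_add.
  replace ((/2)^j * (2^j * 2^(T-j))) with (((/2) * 2)^j * 2^(T-j)) by (rewrite Rpow_mult_distr; ring).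
  replace (/2 * 2) with 1 by field. rewrite pow1. rewrite Rmult_1_l. apply pow_R1_Rle. lra. Qed.

Lemma left_tail : forall L T, (T <= S L)%nat -> sumR T (fun j => INR (binom L j)) <= 2^T * (3/2)^L.
Proof. intros L T HT.
  apply Rle_trans with (sumR T (fun j => INR (binom L j) * (/2)^j) * 2^T).
  { rewrite <- sumR_scal_r. apply sumR_le. intros j Hj. assert (0 <= INR (binom L j)) by apply pos_INR.
    assert (H1 := half_pow_ge1 j T ltac:(lia)). nra. }
  rewrite Rmult_comm. apply Rmult_le_compat_l. apply pow_le; lra.
  replace (3/2) with (1 + /2) by field. rewrite <- binom_thm. apply sumR_mono_range. lia.
  intros. apply Rmult_le_pos. apply pos_INR. apply pow_le; lra. Qed.

Lemma right_tail : forall L T, (T <= S L)%nat -> sumR (S L - T) (fun k => INR (binom L (T + k))) <= 3^L * (/2)^T.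
Proof. intros L T HT.
  apply Rle_trans with (sumR (S L - T) (fun k => INR (binom L (T + k)) * 2^(T+k)) * (/2)^T).
  { rewrite <- sumR_scal_r. apply sumR_le. intros k Hk. assert (0 <= INR (binom L (T+k))) by apply pos_INR.
    assert (H1 : 1 <= 2^(T+k) * (/2)^T). { rewrite Rmult_comm. apply half_pow_ge1. lia. } nra. }
  apply Rmult_le_compat_r. apply pow_le; lra.
  replace 3 with (1 + 2) by ring. rewrite <- binom_thm.
  replace (S L) with (T + (S L - T))%nat at 2 by lia. rewrite sumR_add.
  assert (0 <= sumR T (fun j => INR (binom L j) * 2^j)).
  { apply sumR_nonneg. intros. apply Rmult_le_pos. apply pos_INR. apply pow_le; lra. } lra. Qed.

Lemma P1 : forall k, 2^((8+k)-8) * (3/2)^(3*(8+k)-1) <= 2^(3*(8+k)-1) / 4.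
Proof. induction k.
  - simpl. lra.
  - replace ((8 + S k) - 8)%nat with (S ((8+k)-8)) by lia.
    replace (3*(8 + S k) - 1)%nat with ((3*(8+k)-1) + 3)%nat by lia.
    remember ((8+k)-8)%nat as a. remember (3*(8+k)-1)%nat as b.
    rewrite !pow_add. rewrite <- tech_pow_Rmult.
    replace ((3/2)^3) with (27/8) by (simpl; field). replace (2^3) with 8 by (simpl; ring).
    assert (0 < 2 ^ a) by (apply pow_lt; lra). assert (0 < (3/2) ^ b) by (apply pow_lt; lra). nra. Qed.

Lemma P2base : 3^125 * (/2)^76 <= 2^125 / 4.
Proof.
  assert (H : 4 * 3^125 <= 2^201).
  { rewrite !pow_IZR. rewrite <- mult_IZR. apply IZR_le. vm_compute. intro Hc; discriminate. }
  assert (E1 : 2^201 = 2^125 * 2^76) by (rewrite <- pow_add; reflexivity).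
  assert (E2 : (/2)^76 * 2^76 = 1) by (rewrite <- Rpow_mult_distr; replace (/2 * 2) with 1 by field; apply pow1).
  assert (P : 0 < (/2)^76) by (apply pow_lt; lra).
  assert (3^125 * (/2)^76 = (4 * 3^125) * (/2)^76 / 4) by field.
  assert (2^125 / 4 = 2^201 * (/2)^76 / 4). { rewrite E1. replace (2 ^ 125 * 2 ^ 76 * (/ 2) ^ 76) with (2^125 * ((/2)^76 * 2^76)) by ring. rewrite E2. field. }
  nra. Qed.

Lemma P2 : forall k, 3^(3*(42+k)-1) * (/2)^(2*(42+k)-8) <= 2^(3*(42+k)-1) / 4.
Proof. induction k.
  - replace (3*(42+0)-1)%nat with 125%nat by lia. replace (2*(42+0)-8)%nat with 76%nat by lia. apply P2base.
  - replace (3*(42 + S k) - 1)%nat with ((3*(42+k)-1) + 3)%nat by lia.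
    replace (2*(42 + S k) - 8)%nat with ((2*(42+k)-8) + 2)%nat by lia.
    remember (3*(42+k)-1)%nat as a. remember (2*(42+k)-8)%nat as b.
    rewrite !pow_add.
    replace (3^3) with 27 by (simpl; ring). replace (2^3) with 8 by (simpl; ring). replace ((/2)^2) with (/4) by (simpl; field).
    assert (0 < 3 ^ a) by (apply pow_lt; lra). assert (0 < (/2) ^ b) by (apply pow_lt; lra). nra. Qed.

Lemma window_big : forall n, (42 <= n)%nat -> 2^(3*n-2) <= sumR n (fun k => INR (binom (3*n-1) (n-8+k))).
Proof. intros n Hn. set (L := (3*n-1)%nat).
  assert (Htot := binom_thm L 1). replace (1+1) with 2 in Htot by ring.
  rewrite (sumR_ext (S L) _ (fun j => INR (binom L j))) in Htot by (intros; rewrite pow1; ring).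
  replace (S L) with ((n - 8) + n + (S L - (2*n-8)))%nat in Htot by (unfold L; lia).
  rewrite !sumR_add in Htot.
  assert (HL := left_tail L (n-8) ltac:(unfold L; lia)).
  assert (HR := right_tail L (2*n-8) ltac:(unfold L; lia)).
  replace (sumR (S L - (2 * n - 8)) (fun i => INR (binom L (n - 8 + n + i)))) with
    (sumR (S L - (2 * n - 8)) (fun k => INR (binom L (2*n-8 + k)))) in Htot by (apply sumR_ext; intros; f_equal; f_equal; lia).
  assert (H1 : 2^(n-8) * (3/2)^L <= 2^L / 4).
  { replace n with (8 + (n - 8))%nat at 1 by lia. unfold L. replace (3*n-1)%nat with (3*(8 + (n-8))-1)%nat by lia. apply P1. }
  assert (H2 : 3^L * (/2)^(2*n-8) <= 2^L / 4).
  { unfold L. replace n with (42 + (n - 42))%nat by lia. apply P2. }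
  assert (E : 2^(3*n-2) = 2^L / 2). { unfold L. replace (3*n-1)%nat with (S (3*n-2)) by lia. simpl. field. }
  rewrite E. lra. Qed.

Lemma bzN_window : forall n k, (8 <= n)%nat -> (k < n)%nat -> bzN (3*n+8) 9 (n + 1 + k) = binom (3*n-1) (n-8+k).
Proof. intros. unfold bzN. natcases; cbn [andb]; try lia. f_equal; lia. Qed.

Lemma sum_big : forall n x0 y, (42 <= n)%nat -> (x0 < 2*n)%nat -> (y < 2*n)%nat ->
  2^(3*n-2) <= sumR n (fun s => INR (bzN (3*n+8) 8 (S s + Jf n x0 y s))).
Proof. intros. eapply Rle_trans. apply window_big; auto. eapply Rle_trans; [|apply sum_to_window; lia].
  apply Req_le. apply sumR_ext. intros. rewrite bzN_window by lia. reflexivity. Qed.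

Lemma zt_S : forall n U v t y, zt n U v (S t) y = sumR (2*n) (fun a => zt n U v t a * K n U a y).
Proof. reflexivity. Qed.

Lemma zt_lin : forall n U v t y, (y < 2*n)%nat ->
  zt n U v t y = sumR (2*n) (fun x => v x * zt n U (ev x) t y).
Proof. intros n U v t. induction t; intros y Hy.
  - simpl. unfold ev. rewrite <- (sumR_indicator (2*n) y (v y)) by auto. apply sumR_ext. intros.
    destruct (Nat.eqb_spec y i); destruct (Nat.eqb_spec i y); subst; try lia; lra.
  - rewrite zt_S. transitivity (sumR (2*n) (fun a => sumR (2*n) (fun x => v x * zt n U (ev x) t a * K n U a y))).
    + apply sumR_ext. intros a Ha. rewrite IHt by auto. rewrite <- sumR_scal_r. reflexivity.
    + rewrite sumR_swap. apply sumR_ext. intros x Hx. rewrite zt_S. rewrite <- sumR_scal_l. apply sumR_ext. intros. ring.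
Qed.

Lemma zt_comb : forall n U v w c t y, zt n U (fun a => v a - c * w a) t y = zt n U v t y - c * zt n U w t y.
Proof. intros n U v w c t. induction t; intros y. reflexivity.
  rewrite !zt_S. rewrite <- sumR_scal_l, <- sumR_minus. apply sumR_ext. intros. rewrite IHt. ring. Qed.

Lemma zt_stat : forall n U pi t y, is_stationary n U pi -> (y < 2*n)%nat -> zt n U pi t y = pi y.
Proof. intros n U pi t y [_ [_ Hs]]. revert y. induction t; intros y Hy. reflexivity.
  rewrite zt_S. rewrite <- (Hs y Hy). apply sumR_ext. intros. rewrite IHt; auto. Qed.

Lemma zt_mass : forall n U v t, (3 <= n)%nat -> (1 <= U)%nat ->
  sumR (2*n) (fun y => zt n U v t y) = sumR (2*n) v.
Proof. intros n U v t Hn HU. induction t. reflexivity. rewrite <- IHt.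
  transitivity (sumR (2*n) (fun a => sumR (2*n) (fun y => zt n U v t a * K n U a y))).
  - rewrite sumR_swap. apply sumR_ext. intros. rewrite zt_S. reflexivity.
  - apply sumR_ext. intros a Ha. rewrite sumR_scal_l. rewrite K_rowsum by auto. ring. Qed.

Lemma zt_nonneg : forall n U v t y, (1 <= U)%nat -> (forall a, (a < 2*n)%nat -> 0 <= v a) -> (y < 2*n)%nat -> 0 <= zt n U v t y.
Proof. intros n U v t. induction t; intros y HU Hv Hy. simpl. auto.
  rewrite zt_S. apply sumR_nonneg. intros. apply Rmult_le_pos. apply IHt; auto. apply K_nonneg; auto. Qed.

Lemma zt_nonexp : forall n U v t, (3 <= n)%nat -> (1 <= U)%nat ->
  sumR (2*n) (fun y => Rabs (zt n U v (S t) y)) <= sumR (2*n) (fun a => Rabs (zt n U v t a)).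
Proof. intros n U v t Hn HU.
  apply Rle_trans with (sumR (2*n) (fun y => sumR (2*n) (fun a => Rabs (zt n U v t a) * K n U a y))).
  - apply sumR_le. intros y Hy. rewrite zt_S. eapply Rle_trans. apply sumR_abs. apply sumR_le. intros a Ha.
    rewrite Rabs_mult. rewrite (Rabs_right (K n U a y)). lra. apply Rle_ge, K_nonneg; auto.
  - rewrite sumR_swap. apply Req_le. apply sumR_ext. intros a Ha. rewrite sumR_scal_l. rewrite K_rowsum by auto. ring. Qed.

Lemma zt_add : forall n U v a b y, zt n U v (a + b) y = zt n U (zt n U v a) b y.
Proof. intros n U v a b. induction b; intros y. rewrite Nat.add_0_r. reflexivity.
  rewrite Nat.add_succ_r. rewrite !zt_S. apply sumR_ext. intros. rewrite IHb. reflexivity. Qed.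

Lemma zt_nonexp_many : forall n U v r t, (3 <= n)%nat -> (1 <= U)%nat ->
  sumR (2*n) (fun y => Rabs (zt n U v (t + r) y)) <= sumR (2*n) (fun a => Rabs (zt n U v t a)).
Proof. intros. induction r. rewrite Nat.add_0_r. lra. rewrite Nat.add_succ_r. eapply Rle_trans. apply zt_nonexp; auto. auto. Qed.

Lemma contraction : forall n U m (nu : nat -> R) w, (3 <= n)%nat -> (1 <= U)%nat ->
  (forall x y, (x < 2*n)%nat -> (y < 2*n)%nat -> nu y <= zt n U (ev x) m y) ->
  sumR (2*n) w = 0 ->
  sumR (2*n) (fun y => Rabs (zt n U w m y)) <= (1 - sumR (2*n) nu) * sumR (2*n) (fun x => Rabs (w x)).
Proof. intros n U m nu w Hn HU Hnu Hw.
  apply Rle_trans with (sumR (2*n) (fun y => sumR (2*n) (fun x => Rabs (w x) * (zt n U (ev x) m y - nu y)))).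
  - apply sumR_le. intros y Hy. rewrite zt_lin by auto.
    replace (sumR (2*n) (fun x => w x * zt n U (ev x) m y)) with (sumR (2*n) (fun x => w x * (zt n U (ev x) m y - nu y))).
    + eapply Rle_trans. apply sumR_abs. apply sumR_le. intros x Hx. rewrite Rabs_mult.
      rewrite (Rabs_right (zt n U (ev x) m y - nu y)). lra. specialize (Hnu x y Hx Hy). lra.
    + transitivity (sumR (2*n) (fun x => w x * zt n U (ev x) m y) - sumR (2*n) w * nu y).
      * rewrite <- sumR_scal_r, <- sumR_minus. apply sumR_ext. intros. ring.
      * rewrite Hw. ring.
  - rewrite sumR_swap. rewrite Rmult_comm. rewrite <- sumR_scal_r. apply Req_le. apply sumR_ext. intros x Hx.
    rewrite sumR_scal_l. rewrite sumR_minus. rewrite zt_mass by auto.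
    replace (sumR (2*n) (ev x)) with 1. ring.
    unfold ev. symmetry. apply sumR_indicator. auto. Qed.

Lemma exp_le : forall a b, a <= b -> exp a <= exp b.
Proof. intros. destruct (Rle_lt_or_eq_dec a b H). apply Rlt_le, exp_increasing; auto. subst; lra. Qed.

Lemma exp_pow : forall a m, exp a ^ m = exp (INR m * a).
Proof. induction m. simpl. rewrite Rmult_0_l, exp_0. reflexivity.
  rewrite S_INR. simpl pow. rewrite IHm. rewrite <- exp_plus. f_equal. ring. Qed.

Lemma one_minus_exp : forall u, 0 <= u <= 1/2 -> exp (-(2*u)) <= 1 - u.
Proof. intros u Hu. assert (H := exp_ineq1_le (2*u)). assert (P := exp_pos (2*u)).
  rewrite exp_Ropp. assert ((1 + 2*u) * (1 - u) >= 1) by nra.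
  apply Rmult_le_reg_l with (exp (2*u)); auto. rewrite Rinv_r by lra. nra. Qed.

Lemma sumR_const : forall k c, sumR k (fun _ => c) = INR k * c.
Proof. induction k; intros; simpl. lra. rewrite IHk. destruct k; simpl; lra. Qed.

Definition delta0 (c : R) : R := exp (-(12*c)) * / (3*c) * (/2)^131.

Lemma delta0_pos : forall c, 1 <= c -> 0 < delta0 c.
Proof. intros. unfold delta0. apply Rmult_lt_0_compat. apply Rmult_lt_0_compat. apply exp_pos.
  apply Rinv_0_lt_compat; lra. apply pow_lt; lra. Qed.

Lemma minor : forall c, 1 <= c -> forall n U, (3 <= n)%nat -> (3 <= U)%nat -> INR n / c <= INR U <= c * INR n ->
  exists nu : nat -> R, (forall x y, (x < 2*n)%nat -> (y < 2*n)%nat -> nu y <= zt n U (ev x) (3*n+8) y)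
     /\ delta0 c <= sumR (2*n) nu.
Proof.
  intros c Hc n U Hn HU HnU.
  set (u := / INR U). set (m := (3*n+8)%nat).
  assert (HUr : 3 <= INR U) by (replace 3 with (INR 3) by (simpl; lra); apply le_INR; lia).
  assert (Hnr : 3 <= INR n) by (replace 3 with (INR 3) by (simpl; lra); apply le_INR; lia).
  assert (Hu0 : 0 < u) by (unfold u; apply Rinv_0_lt_compat; lra).
  assert (Hu1 : u <= 1/3). { unfold u. replace (1/3) with (/3) by field. apply Rinv_le_contravar; lra. }
  assert (Hucn : u <= c / INR n). { unfold u. destruct HnU as [H1 H2].
    replace (c / INR n) with (/ (INR n / c)) by (field; lra). apply Rinv_le_contravar; auto.
    apply Rdiv_lt_0_compat; lra. }
  set (alpha := u * (1 - u)^m * (/2)^m).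
  set (beta := if (42 <=? n)%nat then 2^(3*n-2) else 1).
  assert (Hbeta : 0 < beta) by (unfold beta; destruct (42 <=? n)%nat; [apply pow_lt|]; lra).
  assert (Halpha : 0 < alpha). { unfold alpha. apply Rmult_lt_0_compat. apply Rmult_lt_0_compat; auto.
    apply pow_lt; lra. apply pow_lt; lra. }
  exists (fun y => if isb n (cyc n y) then 0 else alpha * beta). split.
  - intros x y Hx Hy. destruct (isb n (cyc n y)) eqn:Hib.
    + apply zt_nonneg; try lia; auto. intros a Ha. unfold ev. destruct (Nat.eqb a x); lra.
    + set (y' := cyc n y) in *. assert (Hy' : (y' < 2*n)%nat) by (apply cyc_lt; auto).
      assert (Ey : cyc n y' = y) by (apply cyc_cyc; auto).
      destruct (zt_lower n U x y' Hn ltac:(lia) Hx Hy' Hib) as [L1 L2]. rewrite Ey in L1, L2.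
      fold u m in L1, L2. fold alpha in L1, L2. unfold beta.
      destruct (Nat.leb_spec 42 n).
      * eapply Rle_trans; [|apply L1]. apply Rmult_le_compat_l; [lra|]. apply sum_big; auto. apply cyc_lt; auto.
      * lra.
  -
    assert (HS : INR (n-2) * (alpha * beta) <= sumR (2*n) (fun y => if isb n (cyc n y) then 0 else alpha * beta)).
    { replace (2*n)%nat with (1 + (n-2) + (n+1))%nat by lia. rewrite (sumR_add (n+1) (1 + (n-2))). rewrite (sumR_add (n-2) 1).
      rewrite <- sumR_const.
      assert (0 <= sumR 1 (fun y => if isb n (cyc n y) then 0 else alpha * beta)).
      { apply sumR_nonneg. intros. destruct (isb _ _); nra. }
      assert (0 <= sumR (n+1) (fun i => if isb n (cyc n (1 + (n - 2) + i)) then 0 else alpha * beta)).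
      { apply sumR_nonneg. intros. destruct (isb _ _); nra. }
      assert (sumR (n-2) (fun _ => alpha * beta) = sumR (n - 2) (fun i => if isb n (cyc n (1 + i)) then 0 else alpha * beta)).
      { apply sumR_ext. intros i Hi. replace (cyc n (1 + i)) with (1+i)%nat by (unfold cyc; natcases; lia).
        unfold isb. natcases; cbn [orb]; auto; lia. }
      lra. }
    eapply Rle_trans; [|apply HS]. clear HS.
    assert (Hn2 : INR (n-2) * u >= / (3*c)).
    { rewrite minus_INR by lia. unfold u. destruct HnU as [H1 H2]. replace (INR 2) with 2 by (simpl; lra).
      apply Rle_ge. apply Rmult_le_reg_l with (3 * c * INR U). nra.
      replace (3 * c * INR U * / (3 * c)) with (INR U) by (field; lra).
      replace (3 * c * INR U * ((INR n - 2) * / INR U)) with (3 * c * (INR n - 2)) by (field; lra). nra. }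
    assert (Hpow : exp (-(12*c)) <= (1 - u)^m).
    { eapply Rle_trans; [|apply pow_incr; split; [| apply one_minus_exp; lra]].
      rewrite exp_pow. apply exp_le. unfold m. rewrite plus_INR, mult_INR. simpl INR.
      assert (u * (3 * INR n + 8) <= 6 * c).
      { apply Rle_trans with (c / INR n * (3 * INR n + 8)). apply Rmult_le_compat_r; lra.
        apply Rmult_le_reg_l with (INR n). lra. replace (INR n * (c / INR n * (3 * INR n + 8))) with (c * (3 * INR n + 8)) by (field; lra). nra. }
      nra. left. apply exp_pos. }
    unfold delta0, alpha, beta. destruct (Nat.leb_spec 42 n).
    + assert (E : (/2)^m * 2^(3*n-2) = (/2)^10).
      { unfold m. replace (3*n+8)%nat with ((3*n-2) + 10)%nat by lia. rewrite pow_add.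
        replace ((/2)^(3*n-2) * (/2)^10 * 2^(3*n-2)) with (((/2) * 2)^(3*n-2) * (/2)^10) by (rewrite Rpow_mult_distr; ring).
        replace (/2 * 2) with 1 by field. rewrite pow1. ring. }
      assert (H10 : (/2)^131 <= (/2)^10) by (apply pow_decr; lra || lia).
      replace (INR (n - 2) * (u * (1 - u) ^ m * (/ 2) ^ m * 2 ^ (3 * n - 2))) with
         ((INR (n - 2) * u) * (1 - u)^m * ((/2)^m * 2^(3*n-2))) by ring. rewrite E.
      assert (P1 : 0 < exp (-(12*c))) by apply exp_pos. assert (P2 : 0 < / (3*c)) by (apply Rinv_0_lt_compat; lra).
      assert (P3 : 0 < (/2)^131) by (apply pow_lt; lra).
      apply Rle_trans with (/ (3*c) * exp (-(12*c)) * (/2)^10).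
      * assert (0 < exp (- (12 * c)) * / (3 * c)) by nra.
        replace (/ (3 * c) * exp (- (12 * c)) * (/ 2) ^ 10) with (exp (- (12 * c)) * / (3 * c) * (/ 2) ^ 10) by ring.
        apply Rmult_le_compat_l; lra.
      * apply Rmult_le_compat_r. apply pow_le; lra. apply Rmult_le_compat; try lra.
    + assert (H10 : (/2)^131 <= (/2)^m) by (apply pow_decr; [lra | unfold m; lia]).
      assert (P1 : 0 < exp (-(12*c))) by apply exp_pos. assert (P2 : 0 < / (3*c)) by (apply Rinv_0_lt_compat; lra).
      assert (P3 : 0 < (/2)^131) by (apply pow_lt; lra).
      replace (INR (n - 2) * (u * (1 - u) ^ m * (/ 2) ^ m * 1)) with ((INR (n - 2) * u) * (1 - u)^m * (/2)^m) by ring.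
      apply Rle_trans with (/ (3*c) * exp (-(12*c)) * (/2)^131).
      * apply Req_le; ring.
      * apply Rmult_le_compat; try lra. nra. apply Rmult_le_compat; try lra.
Qed.

Theorem lemma13 : forall c : R, 1 <= c ->
  exists C : R, 0 < C /\
  forall n U : nat, (3 <= n)%nat -> (3 <= U)%nat ->
  INR n / c <= INR U <= c * INR n ->
  forall pi : nat -> R, is_stationary n U pi ->
  forall z0 : nat -> R, (forall x, (x < 2 * n)%nat -> 0 <= z0 x) ->
  0 < sumR (2 * n) z0 ->
  forall eps : R, 0 < eps <= 1 / 2 ->
  forall t : nat, C * INR n * ln (INR n / eps) <= INR t ->
  forall x : nat, (x < 2 * n)%nat ->
  Rabs (zt n U z0 t x - pi x * sumR (2 * n) z0) <= eps / (2 * INR n) * sumR (2 * n) z0.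
Proof.
  intros c Hc. assert (Hd0 := delta0_pos c Hc). set (d0 := delta0 c) in *.
  exists (6 * (2 / d0 + 1)). split. { assert (0 < 2 / d0) by (apply Rdiv_lt_0_compat; lra). lra. }
  intros n U Hn HU HnU pi Hpi z0 Hz0 HF eps Heps t Ht x Hx.
  set (F := sumR (2*n) z0) in *. set (m := (3*n+8)%nat).
  destruct (minor c Hc n U Hn HU HnU) as [nu [Hnu Hsum]]. fold d0 in Hsum. fold m in Hnu.
  set (dl := sumR (2*n) nu) in *.
  assert (Hdl1 : dl <= 1).
  { unfold dl. apply Rle_trans with (sumR (2*n) (fun y => zt n U (ev 0) m y)).
    apply sumR_le. intros. apply Hnu; lia. rewrite zt_mass by lia. unfold ev. rewrite sumR_indicator by lia. lra. }
  set (w := fun a => z0 a - F * pi a).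
  assert (E1 : zt n U z0 t x - pi x * F = zt n U w t x).
  { unfold w. rewrite zt_comb. rewrite (zt_stat n U pi t x) by auto. ring. }
  rewrite E1.
  destruct Hpi as [Hpi0 [Hpi1 Hpi2]].
  assert (Sw : sumR (2*n) w = 0). { unfold w. rewrite sumR_minus, sumR_scal_l, Hpi1. fold F. ring. }
  set (A := fun k => sumR (2*n) (fun y => Rabs (zt n U w (k*m) y))).
  assert (HA : forall k, A k <= (1 - dl)^k * A 0%nat).
  { induction k. simpl. lra.
    unfold A. replace (S k * m)%nat with (k*m + m)%nat by lia.
    rewrite (sumR_ext (2*n) (fun y => Rabs (zt n U w (k*m + m) y)) (fun y => Rabs (zt n U (zt n U w (k*m)) m y)))
      by (intros; rewrite zt_add; reflexivity).
    eapply Rle_trans. apply contraction with (nu := nu); auto; try lia.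
    rewrite zt_mass by lia. auto. fold dl. fold (A k). simpl pow.
    assert (0 <= 1 - dl) by lra. rewrite Rmult_assoc. apply Rmult_le_compat_l; auto. }
  assert (HA0 : A 0%nat <= 2 * F).
  { unfold A. simpl. unfold w. apply Rle_trans with (sumR (2*n) (fun y => z0 y + F * pi y)).
    apply sumR_le. intros y Hy. specialize (Hz0 y Hy). specialize (Hpi0 y Hy).
    assert (0 <= F * pi y) by (apply Rmult_le_pos; lra). apply Rabs_le; split; lra.
    rewrite sumR_plus, sumR_scal_l, Hpi1. fold F. lra. }
  set (k := (t / m)%nat).
  assert (Hm : (0 < m)%nat) by (unfold m; lia).
  assert (Htk : (t = k * m + t mod m)%nat). { unfold k. rewrite Nat.mul_comm. apply Nat.div_mod. lia. }
  assert (Hmod : (t mod m < m)%nat) by (apply Nat.mod_upper_bound; lia).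
  assert (H1 : Rabs (zt n U w t x) <= (1 - dl)^k * (2 * F)).
  { eapply Rle_trans. apply (sumR_single_le (2*n) (fun y => Rabs (zt n U w t y)) x). intros; apply Rabs_pos. auto.
    rewrite Htk. eapply Rle_trans. apply zt_nonexp_many; lia. fold (A k).
    eapply Rle_trans. apply HA. apply Rmult_le_compat_l. apply pow_le; lra. auto. }
  eapply Rle_trans. apply H1.
  assert (HFp : 0 < F) by auto.
  assert (H2 : (1 - dl)^k <= exp (- (d0 * INR k))).
  { apply Rle_trans with ((1 - d0)^k). apply pow_incr; lra.
    apply Rle_trans with (exp (-d0) ^ k). apply pow_incr. split. lra. assert (H := exp_ineq1_le (-d0)). lra.
    rewrite exp_pow. apply Req_le. f_equal. ring. }
  assert (Hn3 : 3 <= INR n) by (replace 3 with (INR 3) by (simpl; lra); apply le_INR; lia).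
  set (L := ln (INR n / eps)) in *.
  assert (HnE : 6 <= INR n / eps). { apply Rmult_le_reg_l with eps. lra. replace (eps * (INR n / eps)) with (INR n) by (field; lra). lra. }
  assert (HL1 : 1 <= L).
  { destruct (Rle_lt_dec 1 L); auto. exfalso. assert (exp L < exp 1) by (apply exp_increasing; auto).
    unfold L in H. rewrite exp_ln in H by lra. assert (H3 := exp_le_3). lra. }
  assert (HkL : 2 * L <= d0 * INR k).
  { assert (Hmr : INR m <= 6 * INR n). { unfold m. rewrite plus_INR, mult_INR. simpl INR. lra. }
    assert (Hlt : INR t < (INR k + 1) * INR m).
    { replace (INR k + 1) with (INR (S k)) by (rewrite S_INR; reflexivity). rewrite <- mult_INR. apply lt_INR. lia. }
    assert (Hk0 : 0 <= INR k) by apply pos_INR.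
    assert (HH : 6 * (2 / d0 + 1) * INR n * L < (INR k + 1) * (6 * INR n)) by nra.
    assert (HH2 : (2 / d0 + 1) * L < INR k + 1).
    { apply Rmult_lt_reg_r with (6 * INR n). lra. nra. }
    assert (HH3 : d0 * ((2 / d0 + 1) * L) < d0 * (INR k + 1)) by (apply Rmult_lt_compat_l; lra).
    replace (d0 * ((2 / d0 + 1) * L)) with (2 * L + d0 * L) in HH3 by (field; lra). nra. }
  assert (H3 : exp (- (d0 * INR k)) <= (eps / INR n)^2).
  { apply Rle_trans with (exp (-(2 * L))). apply exp_le. lra.
    replace (-(2*L)) with (- L + - L) by ring. rewrite exp_plus. rewrite exp_Ropp. unfold L. rewrite exp_ln by lra.
    apply Req_le. field. split; lra. }
  assert (H4 : (eps / INR n)^2 * (2 * F) <= eps / (2 * INR n) * F).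
  { assert (0 < eps / INR n) by (apply Rdiv_lt_0_compat; lra).
    assert (eps / INR n <= 1/4). { apply Rmult_le_reg_l with (INR n). lra. replace (INR n * (eps / INR n)) with eps by (field; lra). lra. }
    replace (eps / (2 * INR n) * F) with ((eps / INR n) * (F / 2)) by (field; lra).
    simpl pow. rewrite Rmult_1_r. set (e := eps / INR n) in *.
    assert (0 <= e * F * (1/4 - e)) by (apply Rmult_le_pos; [apply Rmult_le_pos|]; lra). nra. }
  assert (0 <= 2 * F) by lra.
  eapply Rle_trans; [|apply H4]. apply Rmult_le_compat_r; auto. lra.
Qed.
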